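(* Let $\ell$, $n$, $s$ be positive integers with $s\le n$. For a positive integer $\ell'$, let $\mathrm{CAN}(n,\ell';s)$ be the set of $n\times n$ matrices of the block diagonal form $\operatorname{diag}(Q_s, I_{n-s})$, where $Q_s$ is a rational orthogonal matrix of order $s$ and level $\ell'$ each of whose entries is either $0$ or a non-integer rational number, and $I_{n-s}$ is the identity of order $n-s$. Then $$\sum_{\ell'\mid\ell}\big|\mathrm{CAN}(n,\ell';s)\big|\le (2s)^{\ell^2 s}.$$
   Context: A rational orthogonal matrix is a square matrix $Q$ with rational entries and $Q^\top Q=I$. The level of a rational matrix $M$ is the smallest positive integer $\ell$ such that $\ell M$ has integer entries. The sum ranges over all positive divisors $\ell'$ of $\ell$. *)

(* Defs.v *)
From HB Require Import structures.
From mathcomp Require Import all_boot all_order all_algebra.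
Set Implicit Arguments. Unset Strict Implicit. Unset Printing Implicit Defensive.
Import Order.TTheory GRing.Theory Num.Theory.
Local Open Scope ring_scope.

Definition rat_orthogonal (s : nat) (Q : 'M[rat]_s) : Prop := Q^T *m Q = 1%:M.

Definition integral_multiple (m k : nat) (M : 'M[rat]_m) : Prop :=
  forall i j, k%:R * M i j \is a Num.int.

Definition has_level (m : nat) (M : 'M[rat]_m) (l : nat) : Prop :=
  (0 < l)%N /\ integral_multiple l M /\
  (forall k : nat, (0 < k)%N -> integral_multiple k M -> (l <= k)%N).

Definition entries_zero_or_nonint (m : nat) (M : 'M[rat]_m) : Prop :=
  forall i j, M i j = 0 \/ M i j \isn't a Num.int.

Definition inCAN (n l' s : nat) (hs : (s <= n)%N) (M : 'M[rat]_n) : Prop :=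
  exists Q : 'M[rat]_s,
    [/\ rat_orthogonal Q, has_level Q l', entries_zero_or_nonint Q &
        M = castmx (subnKC hs, subnKC hs) (block_mx Q 0 0 (1%:M : 'M[rat]_(n - s)))].

(* Main.v *)
Require Import Defs.
From HB Require Import structures.
From mathcomp Require Import all_boot all_order all_algebra zify ring.
Import Order.TTheory GRing.Theory Num.Theory.
Local Open Scope ring_scope.

Definition uvec {s : nat} (x : 'I_s * bool) (i : 'I_s) : int :=
  if i == x.1 then (if x.2 then -1 else 1) else 0.

Lemma abs_step (z : int) : z != 0 ->
  (`|z - (if z < 0 then -1 else 1)%R|%N = `|z|%N - 1)%N.
Proof. case: ltrP => h hz; lia. Qed.

Lemma decomp (s : nat) (hs0 : (0 < s)%N) (L : nat) : forall v : 'I_s -> int,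
  (\sum_i `|v i| <= L)%N -> odd (\sum_i `|v i|) = odd L ->
  exists t : L.-tuple ('I_s * bool), forall i, v i = \sum_(x <- t) uvec x i.
Proof.
elim: L => [|L IH] v hle hodd.
  exists [tuple]; move=> i; rewrite big_nil.
  move: hle; rewrite leqn0 sum_nat_eq0 => /forallP /(_ i) /implyP.
  by move=> /(_ isT); rewrite absz_eq0 => /eqP.
pose i1 : 'I_s := Ordinal hs0.
have [i0 [b [hnew hsum]]] : exists i0 b, 
   let v' := fun i => v i - uvec (i0, b) i in
   (\sum_i `|v' i| <= L)%N /\ odd (\sum_i `|v' i|) = odd L.
  have [hz|hnz] := eqVneq (\sum_i `|v i|)%N 0%N.
    have h0 : forall i, v i = 0.
      move=> i; move/eqP: hz; rewrite sum_nat_eq0 => /forallP /(_ i) /implyP.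
      by move=> /(_ isT); rewrite absz_eq0 => /eqP.
    exists i1, false => /=.
    rewrite (bigD1 i1) //= big1 => [|i hi]; last by rewrite h0 /uvec (negPf hi).
    rewrite h0 /uvec eqxx /= addn0.
    move: hodd; rewrite hz /= => hL. 
    have hL1 : (0 < L)%N by case: L hL {IH hle hz} => //.
    split; first lia. by move: hL; case: (odd L).
  have [i0 hi0] : exists i0, v i0 != 0.
    apply/existsP; apply: contraR hnz; rewrite negb_exists => /forallP h.
    by apply/eqP; apply: big1 => i _; move: (h i); rewrite negbK => /eqP ->.
  exists i0, (v i0 < 0) => /=.
  have E : (\sum_i `|v i - uvec (i0, (v i0 < 0)%R) i|%N = (\sum_i `|v i|%N) - 1)%N.
    rewrite (bigD1 i0) //= [X in (_ = X - _)%N](bigD1 i0) //=.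
    rewrite (eq_bigr (fun i => `|v i|%N)) => [|i hi]; last by rewrite /uvec (negPf hi) subr0.
    rewrite /uvec eqxx /=.
    have := @abs_step _ hi0. have : (0 < `|v i0|)%N by rewrite absz_gt0. case: (v i0 < 0)%R => /= hp ->.
      lia. lia.
  rewrite E; split; first lia.
  have hp : (0 < \sum_i `|v i|)%N by lia.
  move: hodd; rewrite -[X in odd X](subnK hp) addn1 /=.
  by case: (odd _); case: (odd L).
have [t ht] := IH _ hnew hsum.
exists (cons_tuple (i0, b) t) => i.
rewrite big_cons -ht; ring.
Qed.

From Stdlib Require Import ClassicalEpsilon.

Lemma nat_sq_sum (s : nat) (a : 'I_s -> nat) :
  (\sum_i a i <= \sum_i a i ^ 2)%N /\ odd (\sum_i a i) = odd (\sum_i a i ^ 2).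
Proof.
split; first by apply: leq_sum => i _; nia.
have hodd : forall (F : 'I_s -> nat), odd (\sum_i F i) = \big[addb/false]_i odd (F i).
  by move=> F; apply: (big_morph odd oddD).
by rewrite !hodd; apply: eq_bigr => i _; rewrite oddX.
Qed.

Lemma int_sum_sq (s : nat) (z : 'I_s -> int) (m : nat) :
  \sum_i z i ^+ 2 = m%:Z -> (\sum_i `|z i| ^ 2)%N = m.
Proof.
move=> h.
have : ((\sum_i `|z i| ^ 2)%N : int) = m.
  rewrite -h -natz natr_sum; apply: eq_bigr => i _.
  by rewrite natrX natz abszE real_normK // num_real.
by case.
Qed.

Definition QF {s l : nat} (F : {ffun 'I_s * 'I_(l ^ 2) -> 'I_s * bool}) : 'M[rat]_s :=
  \matrix_(i, j) ((\sum_(k < l ^ 2) uvec (F (j, k)) i)%:~R / l%:R).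

Definition MF {n s l : nat} (hs : (s <= n)%N) (F : {ffun 'I_s * 'I_(l ^ 2) -> 'I_s * bool})
  : 'M[rat]_n :=
  castmx (subnKC hs, subnKC hs) (block_mx (QF F) 0 0 (1%:M : 'M[rat]_(n - s))).

Lemma cover (l n s l' : nat) (hl : (0 < l)%N) (hs0 : (0 < s)%N) (hs : (s <= n)%N)
  (M : 'M[rat]_n) : (l' %| l)%N -> inCAN l' hs M -> exists F, M = MF (l:=l) hs F.
Proof.
move=> hdvd [Q [hQ [hl'0 [hint' _]] _ ->]].
have hint : forall i j, l%:R * Q i j \is a Num.int.
  move=> i j; rewrite -(divnK hdvd) natrM -mulrA; apply: rpredM => //.
  exact: rpred_nat.
pose z i j := Num.floor (l%:R * Q i j).
have hz : forall i j, (z i j)%:~R = l%:R * Q i j by move=> i j; apply: floorK.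
have hcol : forall j, exists t : (l ^ 2).-tuple ('I_s * bool),
    forall i, z i j = \sum_(x <- t) uvec x i.
  move=> j.
  have hc : \sum_i Q i j * Q i j = 1.
    have := congr1 (fun A : 'M[rat]_s => A j j) (hQ : Q^T *m Q = 1%:M); rewrite !mxE eqxx /= => h; rewrite -[RHS]h.
    by apply: eq_bigr => i _; rewrite mxE.
  have hzi : \sum_i z i j ^+ 2 = (l ^ 2)%N%:Z.
    apply: (@intr_inj rat); rewrite rmorph_sum /=.
    rewrite (eq_bigr (fun i => l%:R ^+ 2 * (Q i j * Q i j))) => [|i _]; last first.
      by rewrite rmorphXn /= hz exprMn expr2.
    by rewrite -mulr_sumr hc mulr1 -natrX pmulrn.
  have hn := int_sum_sq _ _ _ hzi.
  have [h1 h2] := nat_sq_sum _ (fun i => `|z i j|%N).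
  rewrite hn in h1 h2.
  exact: (decomp _ hs0 _ (fun i => z i j) h1 h2).
pose T j := proj1_sig (constructive_indefinite_description _ (hcol j)).
have hT : forall i j, z i j = \sum_(x <- T j) uvec x i.
  by move=> i j; rewrite /T; case: (constructive_indefinite_description _ _).
exists [ffun p => tnth (T p.1) p.2].
rewrite /MF; congr castmx; congr block_mx.
apply/matrixP => i j; rewrite mxE.
rewrite (eq_bigr (fun k => uvec (tnth (T j) k) i)) => [|k _]; last by rewrite ffunE.
rewrite -(big_tuple _ _ (T j) xpredT (fun x => uvec x i)) -hT hz mulrC mulKf //.
by rewrite pnatr_eq0 -lt0n.
Qed.

Lemma disj (n s a b : nat) (hs : (s <= n)%N) (M : 'M[rat]_n) :
  inCAN a hs M -> inCAN b hs M -> a = b.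
Proof.
move=> [Q1 [_ [ha1 [ha2 ha3]] _ e1]] [Q2 [_ [hb1 [hb2 hb3]] _ e2]].
move: e2; rewrite e1.
move=> /(congr1 (castmx (esym (subnKC hs), esym (subnKC hs)))).
rewrite !castmxK => /(congr1 ulsubmx); rewrite !block_mxKul => E.
subst Q2; apply/eqP; rewrite eqn_leq; apply/andP; split.
  exact: ha3.
exact: hb3.
Qed.

Lemma sum_le1 (D : seq nat) (p : pred nat) :
  uniq D -> (forall a b, a \in D -> b \in D -> p a -> p b -> a = b) ->
  (\sum_(a <- D) (p a : nat) <= 1)%N.
Proof.
elim: D => [|a D IH] /=; first by rewrite big_nil.
move=> /andP[haD hu] hP; rewrite big_cons.
case: (boolP (p a)) => pa /=.
  rewrite big_seq big1 // => b hb; case: (boolP (p b)) => // pb.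
  have eab : a = b by apply: hP => //; rewrite ?mem_head // inE hb orbT.
  by move: haD; rewrite eab hb.
apply: IH => // a' b' ha hb; apply: hP; by rewrite inE ?ha ?hb orbT.
Qed.

Lemma sum_count (T : eqType) (D : seq nat) (P : nat -> pred T) (r : seq T) :
  uniq D -> (forall a b x, a \in D -> b \in D -> P a x -> P b x -> a = b) ->
  (\sum_(a <- D) count (P a) r <= size r)%N.
Proof.
move=> hD hP; elim: r => [|x r IH]; first by rewrite big1.
rewrite /= (eq_bigr (fun a => P a x + count (P a) r)%N) // big_split /=.
rewrite -add1n; apply: leq_add => //.
apply: sum_le1 => // a b ha hb; exact: hP.
Qed.

Definition dec (P : Prop) : bool :=
  if excluded_middle_informative P then true else false.

Lemma decP (P : Prop) : dec P <-> P.
Proof. by rewrite /dec; case: excluded_middle_informative. Qed.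

Theorem mainTheorem4 (l n s : nat) (hl : (0 < l)%N) (hs0 : (0 < s)%N)
    (hs : (s <= n)%N) :
  exists E : nat -> seq 'M[rat]_n,
    (forall l' : nat, l' \in divisors l ->
       uniq (E l') /\ (forall M : 'M[rat]_n, M \in E l' <-> inCAN l' hs M)) /\
    (\sum_(l' <- divisors l) size (E l') <= (2 * s) ^ (l ^ 2 * s))%N.
Proof.
pose Eall := undup (map (MF (l:=l) hs) (enum {ffun 'I_s * 'I_(l ^ 2) -> 'I_s * bool})).
exists (fun l' => [seq M <- Eall | dec (inCAN l' hs M)]).
split.
  move=> l' hl'; split; first by rewrite filter_uniq // undup_uniq.
  move=> M; rewrite mem_filter mem_undup; split.
    by move=> /andP[/decP h _].
  move=> h; apply/andP; split; first by apply/decP.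
  rewrite -dvdn_divisors // in hl'.
  have [F ->] := cover _ _ _ _ hl hs0 hs M hl' h.
  by apply: map_f; rewrite mem_enum.
rewrite (eq_bigr (fun l' => count (fun M => dec (inCAN l' hs M)) Eall)) => [|l' _]; last first.
  exact: size_filter.
apply: leq_trans (sum_count _ _ _ _ (divisors_uniq l) _) _.
  by move=> a b x _ _ /decP ha /decP hb; exact: disj ha hb.
apply: leq_trans (size_undup _) _.
rewrite size_map -cardE card_ffun !card_prod !card_ord card_bool.
by rewrite mulnC [(l ^ 2 * s)%N]mulnC.
Qed.
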